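(* Let $n\ge0$, $\alpha\ge1$ be integers, $N=2^{n+1}$, $c=2^\alpha+1$, and consider the 1D-Tree and the $c$-DAG over the uniform dataset $\{0,\dots,N-1\}$ (described in the context). Let $s$ be a real number with $1<s\le N$ and $\kappa=\lfloor\log_2(N/s)\rfloor$, and assume $2^{n-\kappa}<s\le\frac{c-2}{c-1}2^{n-\kappa+1}$. Then for $Q\sim\mathcal{I}_s$, \[ \mathbb{P}_{\mathcal{I}_s}\bigl(\mathrm{level}_{c\text{-DAG}}(Q)-\mathrm{level}_{\mathrm{Tree}}(Q)=k\bigr)= \begin{cases} \dfrac{2^{\kappa}(2^{n-\kappa+1}-s)}{N-s}=\dfrac{N-2^\kappa s}{N-s}, & k=0,\\[2mm] \dfrac{2^{\kappa-k}s}{N-s}, & k\in\{1,\dots,\kappa\}, \end{cases} \] and this probability is $0$ for every other integer $k$.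
   Context: The 1D-Tree over $\mathcal{D}=\{0,\dots,N-1\}\subset[0,N)$ has levels $\ell=0,\dots,n+1$; its level-$\ell$ nodes are the intervals $[m2^{n-\ell+1},(m+1)2^{n-\ell+1})$, $m=0,\dots,2^\ell-1$. The $c$-DAG over $\mathcal{D}$ has levels $\ell=0,\dots,n+1$; with $u_\ell=2^{n-\ell+1}/(c-1)$, its level-$\ell$ nodes are the intervals $[mu_\ell,\,mu_\ell+2^{n-\ell+1})$, $m=0,1,\dots,(c-1)2^\ell-(c-1)$ (a node $[a,a+L)$ has children $[a+jL/(2(c-1)),\,a+jL/(2(c-1))+L/2)$, $j=0,\dots,c-1$). SRC-search returns a node of the deepest level whose interval contains $Q$; $\mathrm{level}_{\mathrm{Tree}}(Q)$ (resp. $\mathrm{level}_{c\text{-DAG}}(Q)$) is the largest $\ell$ such that some level-$\ell$ node of the respective structure contains $Q$. $\mathcal{I}_s$ is the distribution of $Q=[x,x+s)$ with $x$ uniform on $[0,N-s]$. *)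

(* Defs.v *)
From HB Require Import structures.
From mathcomp Require Import all_boot all_order all_algebra.
From mathcomp Require Import all_classical all_reals all_analysis.
Set Implicit Arguments. Unset Strict Implicit. Unset Printing Implicit Defensive.
Import Order.TTheory GRing.Theory Num.Theory.
Local Open Scope ring_scope.

Section Defs.
Variable R : realType.

(* width of a level-l node in both structures: 2^(n-l+1), l in 0..n+1 *)
Definition node_width (n l : nat) : R := (2 : R) ^+ (n.+1 - l).

(* Q = [x, x+s) is contained in [a, a+L)  (s > 0) *)
Definition contains (a L x s : R) : bool := (a <= x) && (x + s <= a + L).

(* some level-l node of the 1D-Tree over {0..N-1}, N = 2^(n+1), contains [x,x+s):
   nodes [m 2^(n-l+1), (m+1) 2^(n-l+1)), m = 0..2^l-1 *)
Definition tree_hit (n l : nat) (x s : R) : bool :=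
  has (fun m : nat => contains (m%:R * node_width n l) (node_width n l) x s)
      (iota 0 (2 ^ l)).

(* some level-l node of the c-DAG contains [x,x+s):
   u_l = 2^(n-l+1)/(c-1), nodes [m u_l, m u_l + 2^(n-l+1)),
   m = 0..(c-1)2^l-(c-1) *)
Definition dag_hit (c n l : nat) (x s : R) : bool :=
  has (fun m : nat =>
         contains (m%:R * (node_width n l / (c.-1)%:R)) (node_width n l) x s)
      (iota 0 ((c.-1 * 2 ^ l - c.-1).+1)).

Definition level_tree (n : nat) (x s : R) : nat :=
  (\max_(l < n.+2 | tree_hit n l x s) (l : nat))%N.

Definition level_dag (c n : nat) (x s : R) : nat :=
  (\max_(l < n.+2 | dag_hit c n l x s) (l : nat))%N.

(* P_{I_s}(A) for Q = [x,x+s), x uniform on [0, N-s]: normalized Lebesgue measure *)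
Definition prob_Is (N s : R) (A : set R) : \bar R :=
  (lebesgue_measure ([set x : R | (0 <= x <= N - s)%R] `&` A) * ((N - s)^-1)%:E)%E.

End Defs.

(* Main.v *)
Require Import Defs.
From HB Require Import structures.
From mathcomp Require Import all_boot all_order all_algebra.
From mathcomp Require Import all_classical all_reals all_analysis.
From mathcomp Require Import zify ring lra.
Import Order.TTheory GRing.Theory Num.Theory.
Local Open Scope ring_scope.
Local Open Scope classical_set_scope.
Local Open Scope ring_scope.
Lemma w_mul (R : realType) (n l : nat) : (l <= n.+1)%N ->
  node_width R n l * 2 ^+ l = 2 ^+ n.+1.
Proof. by move=> hl; rewrite /node_width -exprD subnK. Qed.

Lemma w_half (R : realType) (n l : nat) : (l < n.+1)%N ->
  node_width R n l = 2 * node_width R n l.+1.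
Proof. by move=> hl; rewrite /node_width subSS subSn // exprS. Qed.

Lemma w_gt0 (R : realType) (n l : nat) : 0 < node_width R n l.
Proof. by rewrite /node_width exprn_gt0. Qed.

Lemma tree_hitP (R : realType) (n l : nat) (x s : R) :
  tree_hit n l x s <-> exists m : nat, (m < 2 ^ l)%N /\
     m%:R * node_width R n l <= x /\ x + s <= m%:R * node_width R n l + node_width R n l.
Proof.
split.
- move/hasP => [m]; rewrite mem_iota add0n => /andP[_ hm] /andP[h1 h2].
  by exists m.
- move=> [m [hm [h1 h2]]]; apply/hasP; exists m.
    by rewrite mem_iota add0n hm.
  by rewrite /contains h1 h2.
Qed.

Lemma contains_le (R : realType) (a L x s : R) : contains a L x s -> s <= L.
Proof. by move/andP=> [h1 h2]; lra. Qed.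

Lemma tree_hit_le (R : realType) (n l : nat) (x s : R) :
  tree_hit n l x s -> s <= node_width R n l.
Proof. by move/hasP=> [m _ /contains_le]. Qed.

Lemma dag_hit_le (R : realType) c (n l : nat) (x s : R) :
  dag_hit c n l x s -> s <= node_width R n l.
Proof. by move/hasP=> [m _ /contains_le]. Qed.

Lemma tree_hit_S (R : realType) (n l : nat) (x s : R) : (l < n.+1)%N ->
  tree_hit n l.+1 x s -> tree_hit n l x s.
Proof.
move=> hl /tree_hitP [m [hm [h1 h2]]]; apply/tree_hitP.
have hw := @w_half R n l hl.
have hmE : m = (odd m + m./2 * 2)%N by rewrite muln2 odd_double_half.
set h := m./2 in hmE; set b := odd m in hmE.
have hb : (b <= 1)%N by case: (b).
exists h; split.
  rewrite expnS in hm; lia.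
rewrite hw; set v := node_width R n l.+1 in h1 h2 *.
have vpos : 0 < v by exact: w_gt0.
have Hm : m%:R = b%:R + h%:R * 2 :> R by rewrite {1}hmE natrD natrM.
have hb' : b%:R <= 1 :> R by rewrite /b; case: (odd m) => /=; rewrite ?ler01 ?lexx.
have hb0 : 0 <= b%:R :> R by [].
rewrite Hm in h1 h2.
split; nra.
Qed.
Lemma tree_hit_mono (R : realType) (n l l' : nat) (x s : R) : (l <= n.+1)%N ->
  (l' <= l)%N -> tree_hit n l x s -> tree_hit n l' x s.
Proof.
move=> hl hl'; have [d hd] : exists d, l = (l' + d)%N by exists (l - l')%N; rewrite subnKC.
subst l.
clear hl'; move: hl; elim: d => [|d IH] hl; first by rewrite addn0.
move=> h; apply: IH; first lia.
apply: tree_hit_S; first lia.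
by rewrite -addnS.
Qed.

Lemma level_tree_prop (R : realType) (n : nat) (x s : R) :
  tree_hit n 0 x s ->
  (level_tree n x s < n.+2)%N /\ tree_hit n (level_tree n x s) x s /\
  (forall i, (i < n.+2)%N -> tree_hit n i x s -> (i <= level_tree n x s)%N).
Proof.
move=> h0.
have hA : (0 < #|[pred i : 'I_n.+2 | tree_hit n i x s]|)%N.
  by apply/card_gt0P; exists ord0.
have [i0 hi0 hE] := eq_bigmax_cond (fun i : 'I_n.+2 => (i : nat)) hA.
rewrite /level_tree.
have -> : (\max_(l < n.+2 | tree_hit n l x s) l)%N = i0 by exact: hE.
split; first exact: ltn_ord.
split; first exact: hi0.
move=> i hi hh; rewrite -hE.
exact: (@leq_bigmax_cond _ _ (fun i : 'I_n.+2 => (i : nat)) (Ordinal hi)).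
Qed.

Lemma level_tree_eq (R : realType) (n l : nat) (x s : R) :
  tree_hit n 0 x s -> (l < n.+1)%N ->
  (level_tree n x s = l <-> tree_hit n l x s /\ ~ tree_hit n l.+1 x s).
Proof.
move=> h0 hl; have [hL [hhit hmax]] := @level_tree_prop R n x s h0.
split.
- move=> hE; rewrite -hE; split => // hh.
  have hl2 : (l.+1 < n.+2)%N by lia.
  by rewrite hE in hh; have := hmax l.+1 hl2 hh; rewrite hE ltnn.
- move=> [h1 h2]; have hle := hmax _ (leq_trans hl (leqnSn _)) h1.
  case: (ltngtP l (level_tree n x s)) => // hlt.
  + exfalso; apply: h2; apply: (@tree_hit_mono R n (level_tree n x s)) => //.
  + by move: hle; rewrite leqNgt hlt.
Qed.

Lemma level_dag_eq (R : realType) c (n l : nat) (x s : R) : (l < n.+2)%N ->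
  dag_hit c n l x s -> (forall i, (l < i)%N -> ~ dag_hit c n i x s) ->
  level_dag c n x s = l.
Proof.
move=> hl h1 h2; apply/eqP; rewrite eqn_leq; apply/andP; split.
- apply/bigmax_leqP => i hi; rewrite leqNgt; apply/negP => hlt.
  exact: (h2 _ hlt hi).
- exact: (@leq_bigmax_cond _ _ (fun i : 'I_n.+2 => (i : nat)) (Ordinal hl)).
Qed.
Definition Iv (R : realType) (n l : nat) (s : R) (m : nat) : set R :=
  [set` `[m%:R * node_width R n l, m%:R * node_width R n l + node_width R n l - s]].

Lemma Dtree_eq (R : realType) (n l : nat) (s : R) : (l <= n.+1)%N -> 0 < s ->
  [set x : R | (0 <= x <= 2 ^+ n.+1 - s)%R] `&` [set x | tree_hit n l x s]
  = \big[setU/set0]_(m < 2 ^ l) Iv R n l s m.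
Proof.
move=> hl s0; rewrite -bigcup_mkord; apply/seteqP; split => x /=.
- move=> [/andP[h0 h1] /tree_hitP [m [hm [a b]]]].
  exists m => //; rewrite /Iv /= in_itv /=; apply/andP; split; lra.
- move=> [m /= hm]; rewrite /Iv /= in_itv /= => /andP[a b].
  have wpos := w_gt0 R n l.
  have hw := @w_mul R n l hl.
  have hm1 : (m.+1)%:R <= (2 ^ l)%:R :> R by rewrite ler_nat.
  rewrite natrX -addn1 natrD in hm1.
  have m0 : 0 <= m%:R :> R by [].
  split; last by apply/tree_hitP; exists m; split => //; split; lra.
  apply/andP; split; first nra.
  have : (m%:R + 1) * node_width R n l <= 2 ^+ l * node_width R n l.
    by rewrite ler_pM2r.
  rewrite [2 ^+ l * _]mulrC hw => H; nra.
Qed.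
Lemma Iv_meas (R : realType) (n l : nat) (s : R) m :
  measurable (Iv R n l s m).
Proof. exact: measurable_itv. Qed.

Lemma Iv_triv (R : realType) (n l : nat) (s : R) : 0 < s ->
  trivIset [set: 'I_(2 ^ l)] (fun m : 'I_(2 ^ l) => Iv R n l s m).
Proof.
move=> s0 i j _ _ [x []]; rewrite /Iv /= !in_itv /= => /andP[a1 b1] /andP[a2 b2].
have wpos := w_gt0 R n l.
apply/val_inj => /=.
case: (ltngtP i j) => // hij; exfalso.
- have : (i.+1)%:R <= j%:R :> R by rewrite ler_nat.
  rewrite -addn1 natrD => H; nra.
- have : (j.+1)%:R <= i%:R :> R by rewrite ler_nat.
  rewrite -addn1 natrD => H; nra.
Qed.

Lemma Dtree_meas (R : realType) (n l : nat) (s : R) : (l <= n.+1)%N -> 0 < s ->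
  measurable ([set x : R | (0 <= x <= 2 ^+ n.+1 - s)%R] `&` [set x | tree_hit n l x s]).
Proof.
move=> hl s0; rewrite Dtree_eq //; apply: bigsetU_measurable => m _; exact: Iv_meas.
Qed.

Lemma Iv_mu (R : realType) (n l : nat) (s : R) (m : nat) : s < node_width R n l ->
  lebesgue_measure (Iv R n l s m) = (node_width R n l - s)%:E.
Proof.
move=> sw; rewrite /Iv lebesgue_measure_itv /= lte_fin ifT; last by lra.
rewrite -EFinB; congr (_%:E); ring.
Qed.

Lemma Dtree_mu (R : realType) (n l : nat) (s : R) : (l <= n.+1)%N -> 0 < s ->
  s < node_width R n l ->
  lebesgue_measure ([set x : R | (0 <= x <= 2 ^+ n.+1 - s)%R] `&` [set x | tree_hit n l x s])
  = (2 ^+ n.+1 - 2 ^+ l * s)%:E.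
Proof.
move=> hl s0 sw; rewrite Dtree_eq //.
rewrite measure_bigsetU_ord; last exact: Iv_triv.
  2: by move=> i; exact: Iv_meas.
rewrite (eq_bigr (fun _ => (node_width R n l - s)%:E)); last first.
  by move=> i _; exact: Iv_mu.
rewrite sumEFin sumr_const card_ord; apply: congr1.
have hw := @w_mul R n l hl.
by rewrite -[_ *+ 2 ^ l]mulr_natr natrX mulrBl hw mulrC.
Qed.
Lemma dag_hit_k (R : realType) (n a k : nat) (x s : R) : (k <= n.+1)%N ->
  0 <= x -> x <= 2 ^+ n.+1 - s ->
  s + node_width R n k / 2 ^+ a <= node_width R n k ->
  dag_hit (2 ^ a).+1 n k x s.
Proof.
move=> hk x0 xN hsu.
set W := node_width R n k in hsu *.
have Wpos : 0 < W by exact: w_gt0.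
have hw : W * 2 ^+ k = 2 ^+ n.+1 by exact: w_mul.
have apos : 0 < (2 : R) ^+ a by rewrite exprn_gt0.
set u := W / 2 ^+ a in hsu.
have upos : 0 < u by rewrite divr_gt0.
set M := (2 ^ a * 2 ^ k - 2 ^ a)%N.
have hMu : M%:R * u = 2 ^+ n.+1 - W.
  rewrite /M natrB; last by rewrite leq_pmulr // expn_gt0.
  rewrite natrM !natrX /u -hw; field; lra.
set t := Num.trunc (x / u).
have xu0 : 0 <= x / u by rewrite divr_ge0 // ltW.
have /andP[t1 t2] := truncn_itv xu0.
rewrite -/t in t1 t2.
have t1' : t%:R * u <= x by rewrite -ler_pdivlMr.
have t2' : x < t.+1%:R * u by rewrite -ltr_pdivrMr.
rewrite -addn1 natrD in t2'.
apply/hasP; exists (minn t M).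
  by rewrite mem_iota add0n /= ltnS geq_minr.
rewrite /contains /= natrX.
case: (leqP t M) => htM.
- apply/andP; split; first exact: t1'.
  rewrite -/W -/u; lra.
- rewrite -/W -/u hMu; apply/andP; split; last lra.
  have : M%:R <= t%:R :> R by rewrite ler_nat ltnW.
  move=> H; have : M%:R * u <= t%:R * u by rewrite ler_pM2r.
  rewrite hMu; lra.
Qed.
Lemma kappa_facts (R : realType) (n k : nat) (s : R) : 1 < s -> s <= 2 ^+ n.+1 ->
  Num.floor (ln ((2 ^+ n.+1 : R) / s) / ln 2) = k%:Z ->
  2 ^+ k * s <= 2 ^+ n.+1 /\ 2 ^+ n.+1 < 2 ^+ k.+1 * s.
Proof.
move=> s1 sN hfl.
have s0 : 0 < s by lra.
have l2 : 0 < ln (2:R) by apply: ln_gt0; lra.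
have Np : (0:R) < 2 ^+ n.+1 by rewrite exprn_gt0.
have Ns : 0 < (2 ^+ n.+1 : R) / s by rewrite divr_gt0.
have := floor_itv (ln ((2 ^+ n.+1 : R) / s) / ln 2); rewrite hfl => /andP[a b].
have ek : (k%:Z)%:~R = k%:R :> R by [].
have ek1 : (k%:Z + 1)%:~R = k.+1%:R :> R by rewrite intrD1 ek -addn1 natrD.
rewrite ek ler_pdivlMr // in a.
rewrite ek1 ltr_pdivrMr // in b.
have p2 : forall j, (2:R) ^+ j \is Num.pos by move=> j; rewrite posrE exprn_gt0.
have lX : forall j, ln ((2:R) ^+ j) = j%:R * ln 2.
  by move=> j; rewrite lnXn // mulr_natl.
split.
- rewrite -ler_pdivlMr //.
  by rewrite -ler_ln ?posrE // lX.
- rewrite -ltr_pdivrMr //.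
  by rewrite -ltr_ln ?posrE // lX.
Qed.
Lemma exp2_le (R : realType) (a b : nat) : (a <= b)%N -> (2:R) ^+ a <= 2 ^+ b.
Proof.
move=> h; rewrite -(subnK h) exprD ler_peMl ?exprn_gt0 ?exprn_ege1 //; lra.
Qed.

Lemma w_lt (R : realType) (n k i : nat) (s : R) : 1 < s ->
  2 ^+ n.+1 < 2 ^+ k.+1 * s -> (k < i)%N -> node_width R n i < s.
Proof.
move=> s1 hB hki.
case: (leqP i n.+1) => hi.
- have hw := @w_mul R n i hi.
  have h2 : (2:R) ^+ k.+1 <= 2 ^+ i by exact: exp2_le.
  have p : (0:R) < 2 ^+ i by rewrite exprn_gt0.
  rewrite -(ltr_pM2r p) hw.
  apply: (lt_le_trans hB); rewrite mulrC ler_pM2l //; lra.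
- by rewrite /node_width (_ : (n.+1 - i = 0)%N) ?expr0 //; lia.
Qed.

Lemma w_ge (R : realType) (n k i : nat) : (i <= k)%N ->
  node_width R n k <= node_width R n i.
Proof. by move=> h; apply: exp2_le; lia. Qed.
Lemma int_aux1 (k : int) (kappa L : nat) : k != 0 -> kappa%:Z - L%:Z = k ->
  (L <= kappa)%N -> ~~ ((0 < k) && (k <= kappa%:Z)) -> False.
Proof. lia. Qed.
Lemma int_aux2 (k : int) (kappa : nat) : (0 < k) && (k <= kappa%:Z) ->
  exists j : nat, [/\ (0 < j)%N, (j <= kappa)%N & k = j%:Z].
Proof. by move=> h; exists `|k|%N; split; lia. Qed.
Lemma int_aux3 (kappa j L : nat) : (j <= kappa)%N -> kappa%:Z - L%:Z = j%:Z ->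
  (L <= kappa)%N -> L = (kappa - j)%N.
Proof. lia. Qed.
Lemma int_aux4 (kappa j : nat) : (j <= kappa)%N -> kappa%:Z - (kappa - j)%N%:Z = j%:Z.
Proof. lia. Qed.
Lemma mD (R : realType) (A B : set R) (a b : R) : measurable A -> measurable B ->
  B `<=` A -> lebesgue_measure A = a%:E -> lebesgue_measure B = b%:E ->
  lebesgue_measure (A `\` B) = (a - b)%:E.
Proof.
move=> mA mB BA ha hb.
have fin : (lebesgue_measure A < +oo)%E by rewrite ha ltry.
have H := measureD (mu := (@lebesgue_measure R)) mA mB fin; rewrite (setIidr BA) in H.
transitivity (lebesgue_measure A - lebesgue_measure B)%E; first exact: H.
by rewrite ha hb.
Qed.
Theorem lemma4 (R : realType) (n alpha : nat) (s : R) (kappa : nat) (k : int) :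
  (1 <= alpha)%N ->
  1 < s -> s <= (2 ^+ n.+1 : R) ->
  Num.floor (ln ((2 ^+ n.+1 : R) / s) / ln 2) = kappa%:Z ->
  (2 ^+ n / 2 ^+ kappa : R) < s ->
  s <= ((2 ^+ alpha).+1%:R - 2) / ((2 ^+ alpha).+1%:R - 1)
         * (2 ^+ n.+1 / 2 ^+ kappa) ->
  prob_Is (2 ^+ n.+1) s
    [set x | (level_dag (2 ^ alpha).+1 n x s)%:Z - (level_tree n x s)%:Z = k]
  = (if k == 0 then
       ((2 ^+ n.+1 - 2 ^+ kappa * s) / (2 ^+ n.+1 - s))%:E
     else if (0 < k) && (k <= kappa%:Z) then
       ((2 ^+ kappa / 2 ^+ `|k|%N * s) / (2 ^+ n.+1 - s))%:E
     else 0%E).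
Proof.
move=> ha s1 sN hfl _ hc.
have s0 : 0 < s by lra.
have [hA hB] := @kappa_facts R n kappa s s1 sN hfl.
have kn : (kappa <= n)%N.
  have : (2:R) ^+ kappa < 2 ^+ n.+1.
    apply: (lt_le_trans _ hA); rewrite -subr_gt0 -[X in _ - X]mulr1 -mulrBr.
    by rewrite mulr_gt0 ?exprn_gt0 // subr_gt0.
  by rewrite ltr_eXn2l // ltr1n.
set N := (2:R) ^+ n.+1 in sN hA hB hc *.
set W := node_width R n kappa.
have hW : W * 2 ^+ kappa = N by apply: w_mul; lia.
have a0 : (0:R) < 2 ^+ alpha by rewrite exprn_gt0.
have hsu : s + W / 2 ^+ alpha <= W.
  have hcE : ((2 ^+ alpha)%N.+1%:R : R) = 2 ^+ alpha + 1.
    by rewrite -addn1 natrD natrXE natrX.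
  move: hc; rewrite hcE -hW mulfK ?expf_neq0 //.
  have -> : (2 ^+ alpha + 1 - 2) / (2 ^+ alpha + 1 - 1) * W = W - W / 2 ^+ alpha :> R.
    by field; lra.
  lra.
have sW : s < W.
  have : 0 < W / 2 ^+ alpha by rewrite divr_gt0 // w_gt0.
  lra.
have Dfacts : forall x, 0 <= x <= N - s ->
   [/\ level_dag (2 ^ alpha).+1 n x s = kappa, (level_tree n x s <= kappa)%N &
     tree_hit n 0 x s].
  move=> x /andP[x0 x1].
  have h0 : tree_hit n 0 x s.
    apply/tree_hitP; exists 0%N; rewrite /node_width subn0 -/N mul0r add0r; split => //.
    split=> //; lra.
  split => //.
  - apply: level_dag_eq; first exact: leq_trans kn (leqnSn n).
      by apply: dag_hit_k => //; exact: leq_trans kn (leqnSn n).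
    move=> i hi /dag_hit_le; have := @w_lt R n kappa i s s1 hB hi; lra.
  - have [_ [hh _]] := @level_tree_prop R n x s h0.
    rewrite leqNgt; apply/negP => hlt.
    have := @tree_hit_le R n _ x s hh; have := @w_lt R n kappa _ s s1 hB hlt; lra.
rewrite /prob_Is -/N.
have sw : forall i, (i <= kappa)%N -> s < node_width R n i.
  by move=> i hi; have := @w_ge R n kappa i hi; rewrite -/W; lra.
have kn1 : (kappa < n.+1)%N by [].
have [-> | knz] := eqVneq k 0.
  rewrite ?eqxx /=.
  have -> : [set x | 0 <= x <= N - s] `&`
     [set x | (level_dag (2 ^ alpha).+1 n x s)%:Z - (level_tree n x s)%:Z = 0]
     = [set x | 0 <= x <= N - s] `&` [set x | tree_hit n kappa x s].
    apply/seteqP; split => x /= [hD hE]; have [hd hl h0] := Dfacts x hD; split => //.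
    - rewrite hd in hE; have hL : level_tree n x s = kappa by clear -hE; lia.
      by have [] := (@level_tree_eq R n kappa x s h0 kn1).1 hL.
    - have hL : level_tree n x s = kappa.
        apply/(@level_tree_eq R n kappa x s h0 kn1); split => // hh.
        have := @tree_hit_le R n _ x s hh; have := @w_lt R n kappa _ s s1 hB (ltnSn _); lra.
      by rewrite hd hL subrr.
  by rewrite Dtree_mu //; exact: leq_trans kn (leqnSn n).
case: ifP => hk; last first.
  have -> : [set x | 0 <= x <= N - s] `&`
     [set x | (level_dag (2 ^ alpha).+1 n x s)%:Z - (level_tree n x s)%:Z = k] = set0.
    apply/seteqP; split => x //= [hD hE]; have [hd hl h0] := Dfacts x hD.
    rewrite hd in hE; move/negbT: hk; exact: int_aux1 knz hE hl.
  by rewrite measure0 mul0e.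
have [j [hj1 hj2 ->]] : exists j : nat, [/\ (0 < j)%N, (j <= kappa)%N & k = j%:Z].
  exact: int_aux2 hk.
set l := (kappa - j)%N.
have hl1 : (l < n.+1)%N by rewrite /l; move: kn; clear; lia.
have hl2 : (l.+1 <= n.+1)%N by [].
have hl0 : (l <= n.+1)%N by exact: ltnW.
have -> : [set x | 0 <= x <= N - s] `&`
     [set x | (level_dag (2 ^ alpha).+1 n x s)%:Z - (level_tree n x s)%:Z = j%:Z]
     = ([set x | 0 <= x <= N - s] `&` [set x | tree_hit n l x s]) `\`
       ([set x | 0 <= x <= N - s] `&` [set x | tree_hit n l.+1 x s]).
  apply/seteqP; split => x /=.
  - move=> [hD hE]; have [hd hl h0] := Dfacts x hD.
    rewrite hd in hE; have hL : level_tree n x s = l.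
      exact: int_aux3 hj2 hE hl.
    have [h1 h2] := (@level_tree_eq R n l x s h0 hl1).1 hL.
    by split => // -[].
  - move=> [[hD h1] h2]; have [hd hl h0] := Dfacts x hD.
    have hL : level_tree n x s = l.
      by apply/(@level_tree_eq R n l x s h0 hl1); split => // hh; apply: h2.
    split => //; rewrite hd hL /l.
    exact: int_aux4.
have hlk : (l <= kappa)%N by rewrite /l leq_subr.
have hl1k : (l.+1 <= kappa)%N by rewrite /l; move: hj1 hj2; clear; lia.
rewrite (@mD R _ _ (2 ^+ n.+1 - 2 ^+ l * s) (2 ^+ n.+1 - 2 ^+ l.+1 * s)).
- rewrite -EFinM; apply: congr1.
  have e : (2:R) ^+ kappa = 2 ^+ l * 2 ^+ j by rewrite -exprD /l subnK.
  rewrite /= e [2 ^+ l.+1]exprS.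
  have j0 : (2:R) ^+ j != 0 by rewrite expf_neq0.
  rewrite mulfK //; congr (_ / _); ring.
- exact: Dtree_meas.
- exact: Dtree_meas.
- move=> x [hD h]; split => //; exact: tree_hit_S.
- by rewrite Dtree_mu // sw.
- by rewrite Dtree_mu // sw.
Qed.
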